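(* Let $N\ge 1$, $\sigma\in(0,1)$, $c>0$ and $q\in(1-\sigma,1)$. Then the client-server mechanism with parameters $(\sigma,c,q)$ is $\epsilon$-differentially private with $\epsilon=\frac{q}{c(q+\sigma-1)}$. That is, for every $\delta\ge 0$, every pair of $\delta$-adjacent initial states $\theta(0),\theta'(0)\in\mathbb{R}^N$, and every measurable set $\mathit{Obs}$ of observation sequences, $$\Pr\big[(x(t),y(t))_{t\ge0}\in \mathit{Obs}\mid \theta(0)\big]\le e^{\epsilon\delta}\,\Pr\big[(x(t),y(t))_{t\ge0}\in \mathit{Obs}\mid \theta'(0)\big].$$
   Context: $Lap(b)$ denotes the Laplace distribution on $\mathbb{R}$ with density $p_L(x\mid b)=\frac{1}{2b}e^{-|x|/b}$. Client-server mechanism with parameters $\sigma\in(0,1)$, $c>0$, $q\in(0,1)$: there are $N$ clients with real initial states $\theta_1(0),\dots,\theta_N(0)$ and one server. At each round $t=0,1,2,\dots$: (i) each client $i$ sends $x_i(t)=\theta_i(t)+\eta_i(t)$ to the server, where the $\eta_i(t)$ ($i\in[N]$, $t\ge0$) are mutually independent with $\eta_i(t)\sim Lap(cq^t)$; (ii) the server sets its state $y(t)=\frac1N\sum_{i=1}^N x_i(t)$; (iii) the server sends $y(t)$ to all clients; (iv) each client updates $\theta_i(t+1)=(1-\sigma)\theta_i(t)+\sigma y(t)$. The adversary observes the sequence $(x(t),y(t))_{t\ge0}$ (all messages and the server's state). Two vectors $\theta,\theta'\in\mathbb{R}^N$ are $\delta$-adjacent ($\delta\ge0$) if there is one index $i$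 with $|\theta_i-\theta'_i|\le\delta$ and $\theta_j=\theta'_j$ for all $j\ne i$. *)

(* Defs.v *)
From HB Require Import structures.
From mathcomp Require Import all_boot all_order all_algebra.
From mathcomp Require Import all_classical all_reals all_analysis.
Set Implicit Arguments. Unset Strict Implicit. Unset Printing Implicit Defensive.
Import Order.TTheory GRing.Theory Num.Theory.
Import numFieldNormedType.Exports.
Local Open Scope classical_set_scope.
Local Open Scope ring_scope.

Definition laplace_pdf {R : realType} (b : R) (x : R) : R :=
  (2 * b)^-1 * expR (- `|x| / b).

Definition has_laplace_law {R : realType} {d : measure_display}
  {T : measurableType d} (P : probability T R) (b : R) (X : T -> R) : Prop :=
  forall B : set R, measurable B ->
    P (X @^-1` B) = (\int[@lebesgue_measure R]_(x in B) (laplace_pdf b x)%:E)%E.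

Definition mutually_independent {R : realType} {d : measure_display}
  {T : measurableType d} (P : probability T R) {I : eqType}
  (X : I -> T -> R) : Prop :=
  forall (s : seq I) (B : I -> set R), uniq s ->
    (forall j, measurable (B j)) ->
    P (\bigcap_(j in [set` s]) (X j @^-1` B j)) =
    (\prod_(j <- s) P (X j @^-1` B j))%E.

Section Mechanism.
Context {R : realType} (N : nat) (sigma : R).

(* Client states theta(t), given the initial state th0 and a realization
   e i t of the noises eta_i(t). *)
Fixpoint client_state (th0 : 'I_N -> R) (e : 'I_N -> nat -> R) (t : nat)
  : 'I_N -> R :=
  match t with
  | 0 => th0
  | t'.+1 =>
      let th := client_state th0 e t' in
      let y := (N%:R)^-1 * \sum_(j < N) (th j + e j t') in
      fun i => (1 - sigma) * th i + sigma * y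
  end.

Definition client_msg (th0 : 'I_N -> R) (e : 'I_N -> nat -> R) (t : nat)
  : 'I_N -> R := fun i => client_state th0 e t i + e i t.

Definition server_state (th0 : 'I_N -> R) (e : 'I_N -> nat -> R) (t : nat)
  : R := (N%:R)^-1 * \sum_(i < N) client_msg th0 e t i.

Definition observation (th0 : 'I_N -> R) (e : 'I_N -> nat -> R)
  : nat -> ('I_N -> R) * R :=
  fun t => (client_msg th0 e t, server_state th0 e t).

End Mechanism.

Definition obs_cylinders {R : realType} (N : nat)
  : set (set (nat -> ('I_N -> R) * R)) :=
  [set A | exists t (B : set R), measurable B /\
     ((exists i : 'I_N, A = [set w | (w t).1 i \in B]) \/
      A = [set w | (w t).2 \in B])].

Definition obs_measurable {R : realType} (N : nat)
  (Obs : set (nat -> ('I_N -> R) * R)) : Prop :=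
  <<s (@obs_cylinders R N) >> Obs.

Definition delta_adjacent {R : realType} (N : nat) (delta : R)
  (th th' : 'I_N -> R) : Prop :=
  exists i : 'I_N, `|th i - th' i| <= delta /\
    (forall j : 'I_N, j != i -> th j = th' j).

(* Main.v *)
Require Import Defs.
From HB Require Import structures.
From mathcomp Require Import all_boot all_order all_algebra.
From mathcomp Require Import all_classical all_reals all_analysis.
From mathcomp Require Import measurable_realfun ring lra.
Import Order.TTheory GRing.Theory Num.Theory.
Import numFieldNormedType.Exports.
Local Open Scope classical_set_scope.
Local Open Scope ring_scope.

Section shift.
Context {R : realType}.
Local Open Scope ereal_scope.
Local Notation mu := (@lebesgue_measure R).

Definition shiftR (s : R) : measurableTypeR R -> measurableTypeR R := fun x => (x + s)%R.
Lemma measurable_shiftR (s : R) : measurable_fun [set: measurableTypeR R] (shiftR s).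
Proof. exact: measurable_realfun.measurable_funD. Qed.
HB.instance Definition _ s := isMeasurableFun.Build _ _ _ _ (shiftR s) (measurable_shiftR s).

Lemma leb_shift (s : R) (A : set R) : measurable A ->
  pushforward mu (shiftR s) A = mu A.
Proof.
move=> mA; apply/esym/lebesgue_measure_unique => //= _ [[a b]] _ <-.
rewrite /pushforward.
have -> : shiftR s @^-1` `]a, b] = `](a - s)%R, (b - s)%R]%classic.
  apply/seteqP; split => x /=; rewrite /shiftR !in_itv /= => /andP [h1 h2]; apply/andP; split.
  - by rewrite ltrBlDr.
  - by rewrite lerBrDr.
  - by rewrite -ltrBlDr.
  - by rewrite -lerBrDr.
rewrite !lebesgue_measure_itv /= !lte_fin ltrD2r.
case: ifP => // _; rewrite -EFinD; congr EFin; ring.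
Qed.

Lemma integral_shift (s : R) (B : set R) (f : R -> \bar R) :
  measurable B -> measurable_fun [set: R] f -> (forall x, 0 <= f x) ->
  \int[mu]_(x in B) f x = \int[mu]_(x in [set x | B (x + s)%R]) f (x + s)%R.
Proof.
move=> mB mf f0.
rewrite -(_ : shiftR s @^-1` B = [set x | B (x + s)%R]) //.
rewrite -(ge0_integral_pushforward (measurable_shiftR s) mu mB); last 2 first.
- exact: measurable_funS mf.
- by move=> *; apply: f0.
by apply: eq_measure_integral => //= A mA AS; exact/esym/leb_shift.
Qed.
End shift.
Section lap.
Context {R : realType}.
Local Open Scope ereal_scope.
Local Notation mu := (@lebesgue_measure R).

Lemma measurable_laplace_pdf (b : R) : measurable_fun [set: R] (laplace_pdf b).
Proof.
rewrite /laplace_pdf; apply: measurable_funM => //.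
apply: measurableT_comp; first exact: measurable_expR.
by apply: measurable_funM => //; apply: measurableT_comp => //.
Qed.

Lemma laplace_pdf_ge0 (b : R) x : (0 < b)%R -> (0 <= laplace_pdf b x)%R.
Proof.
move=> b0; rewrite /laplace_pdf mulr_ge0 // ?expR_ge0 // invr_ge0 mulr_ge0 // ltW // ltr0Sn.
Qed.

Lemma laplace_pdf_shift (b s x : R) : (0 < b)%R ->
  (laplace_pdf b x <= expR (`|s| / b) * laplace_pdf b (x + s))%R.
Proof.
move=> b0; rewrite /laplace_pdf mulrCA; apply: ler_wpM2l.
  by rewrite invr_ge0 mulr_ge0 // ltW.
rewrite -expRD ler_expR.
rewrite -mulrDl; apply: ler_wpM2r; first by rewrite invr_ge0 ltW.
have := ler_normD x s.
lra.
Qed.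

Lemma measurable_shift_set (s : R) (B : set R) : measurable B ->
  measurable [set x : R | B (x + s)%R].
Proof.
move=> mB; have := measurable_shiftR s measurableT B mB.
by rewrite setTI.
Qed.

Lemma laplace_shift_le d (T : measurableType d) (P : probability T R) (b s : R)
    (X : T -> R) (B : set R) :
  (0 < b)%R -> has_laplace_law P b X -> measurable B ->
  P (X @^-1` [set x | B (x + s)%R]) <= (expR (`|s| / b))%:E * P (X @^-1` B).
Proof.
move=> b0 hX mB.
have mBs := measurable_shift_set s _ mB.
have mp : measurable_fun [set: R] (fun x => (laplace_pdf b x)%:E).
  by apply/measurable_EFinP; exact: measurable_laplace_pdf.
rewrite (hX _ mBs) (hX _ mB) (integral_shift s _ _ mB) //; last first.
  by move=> x; rewrite lee_fin laplace_pdf_ge0.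
have mps : measurable_fun [set: R] (fun x => (laplace_pdf b (x + s))%:E).
  apply/measurable_EFinP; apply: measurableT_comp; first exact: measurable_laplace_pdf.
  exact: measurable_shiftR.
have mps' : measurable_fun [set: R] (fun x => (expR (`|s| / b))%:E * (laplace_pdf b (x + s))%:E).
  apply/measurable_EFinP; apply: measurable_funM => //.
  apply: measurableT_comp; first exact: measurable_laplace_pdf.
  exact: measurable_shiftR.
rewrite -ge0_integralZl_EFin //; last 2 first.
- by move=> x _; rewrite lee_fin laplace_pdf_ge0.
- exact: measurable_funTS.
apply: ge0_le_integral => //.
- by move=> x _; rewrite lee_fin laplace_pdf_ge0.
- exact: measurable_funTS.
- exact: measurable_funTS.
- by move=> x _; rewrite lee_fin laplace_pdf_shift.
Qed.
End lap.
Section rect.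
Context {R : realType} (N : nat) (j0 : ('I_N * nat)%type).
Local Notation I := ('I_N * nat)%type.
Local Notation S := ('I_N -> nat -> R).

Definition rect (u : seq I) (H : I -> set R) : set S :=
  [set e | forall j, j \in u -> H j (e j.1 j.2)].

Definition Pi : set (set S) :=
  [set A | exists u H, (forall j, measurable (H j)) /\ A = rect u H].

Definition padH (u : seq I) (H : I -> set R) : I -> set R :=
  fun j => if j \in u then H j else setT.

Lemma rect_pad u v H : {subset u <= v} -> rect u H = rect v (padH u H).
Proof.
move=> uv; apply/seteqP; split => e /= He j jv.
  by rewrite /padH; case: ifP => // ju; apply: He.
by move: (He j (uv _ jv)); rewrite /padH jv.
Qed.

Lemma padH_meas u H : (forall j, measurable (H j)) -> forall j, measurable (padH u H j).
Proof. by move=> mH j; rewrite /padH; case: ifP. Qed.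

Lemma Pi0 : Pi set0.
Proof.
exists [:: j0], (fun _ => set0); split => //.
by apply/seteqP; split => // e /= /(_ j0); rewrite mem_seq1 eqxx => /(_ erefl).
Qed.

Lemma PiI : setI_closed Pi.
Proof.
move=> _ _ [u [H [mH ->]]] [u' [H' [mH' ->]]].
exists (u ++ u'), (fun j => padH u H j `&` padH u' H' j); split.
  by move=> j; apply: measurableI; apply: padH_meas.
rewrite (rect_pad u (u ++ u') H); last by move=> j ju; rewrite mem_cat ju.
rewrite (rect_pad u' (u ++ u') H'); last by move=> j ju; rewrite mem_cat ju orbT.
by apply/seteqP; split => e /=; [move=> [h1 h2] j jv; split; [apply: h1|apply: h2]
  |move=> h; split => j jv; have [] := h j jv].
Qed.

Section decomp.
Variables (v : seq I) (HA HB : I -> set R).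
Hypothesis vu : uniq v.

Definition Hk (k : nat) : I -> set R := fun j =>
  if (index j v < k)%N then HA j `&` HB j
  else if index j v == k then HA j `\` HB j else HA j.

Lemma rect_decomp : rect v HA `\` rect v HB =
  \bigcup_(X in [set rect v (Hk k) | k in `I_(size v)]) X.
Proof.
apply/seteqP; split => e.
  move=> [eA /= eB].
  pose p := fun j : I => ~~ `[< HB j (e j.1 j.2) >].
  have hp : has p v.
    apply/negPn/negP => /hasPn hn; apply: eB => j jv.
    by have := hn j jv; rewrite /p negbK => /asboolP.
  exists (rect v (Hk (find p v))); first by exists (find p v) => //=; rewrite -has_find.
  move=> j jv; rewrite /Hk.
  have ej := eA j jv.
  case: ltnP => hjk.
    split => //; have := before_find j0 hjk; rewrite nth_index // /p => /negbFE.
    by move/asboolP.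
  case: eqP => hjk2 //; split => //.
  have := nth_find j0 hp; rewrite -hjk2 nth_index // /p.
  by move/asboolP.
move=> [X [k /= kv <-]] eX; split.
  by move=> j jv; have := eX j jv; rewrite /Hk; case: ifP => [_ []|_] //; case: ifP => [_ []|_].
move=> eB.
have jv : nth j0 v k \in v by rewrite mem_nth.
have := eX _ jv; rewrite /Hk index_uniq // ltnn eqxx => -[_]; apply.
exact: eB.
Qed.

Lemma rect_decomp_triv : trivIset [set rect v (Hk k) | k in `I_(size v)] id.
Proof.
have key : forall k l, (k < l)%N -> (k < size v)%N ->
    rect v (Hk k) `&` rect v (Hk l) = set0.
  move=> k l kl kv; apply/seteqP; split => // e [ek el].
  have jv : nth j0 v k \in v by rewrite mem_nth.
  have := ek _ jv; have := el _ jv.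
  by rewrite /Hk index_uniq // kl ltnn eqxx => -[_ ?] [_]; apply.
move=> _ _ [k /= kv <-] [l /= lv <-] [e [ek el]].
case: (ltngtP k l) => [kl|lk|-> //].
  by have := key k l kl kv; move/seteqP => [/(_ e (conj ek el))].
by have := key l k lk lv; move/seteqP => [/(_ e (conj el ek))].
Qed.
End decomp.

Lemma PiD : semi_setD_closed Pi.
Proof.
move=> _ _ [u [H [mH ->]]] [u' [H' [mH' ->]]].
pose v := undup (u ++ u').
rewrite (rect_pad u v H); last by move=> j ju; rewrite mem_undup mem_cat ju.
rewrite (rect_pad u' v H'); last by move=> j ju; rewrite mem_undup mem_cat ju orbT.
exists [set rect v (Hk v (padH u H) (padH u' H') k) | k in `I_(size v)]; split.
- exact/finite_image/finite_II.
- move=> _ [k _ <-]; exists v, (Hk v (padH u H) (padH u' H') k); split => // j.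
  rewrite /Hk; have mA := padH_meas u _ mH j; have mB := padH_meas u' _ mH' j.
  by case: ifP => _; [exact: measurableI|case: ifP => _ //; exact: measurableD].
- exact/rect_decomp/undup_uniq.
- exact/rect_decomp_triv/undup_uniq.
Qed.

Definition Sty : Type := 'I_N -> nat -> R.
HB.instance Definition _ := Pointed.on Sty.
HB.instance Definition _ := @isSemiRingOfSets.Build (sigma_display Pi) Sty Pi Pi0 PiI PiD.

Lemma ring_decomp (A : set S) : <<r Pi >> A -> exists B : set (set S),
  [/\ finite_set B, trivIset B id, (forall X, B X -> Pi X) & A = \bigcup_(X in B) X].
Proof.
move=> hA.
have := @SetRing.ring_finite_set _ Sty A hA.
move=> [B [fB _ tB mB ->]]; exists B; split => // X BX.
by apply: mB; rewrite inE.
Qed.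

End rect.

Lemma prod_lee {R : realType} (J : Type) (s : seq J) (f g : J -> \bar R) (a : J -> R) :
  (forall j, (0 <= f j)%E) -> (forall j, (0 <= g j)%E) -> (forall j, 0 <= a j) ->
  (forall j, (f j <= (a j)%:E * g j)%E) ->
  (\prod_(j <- s) f j <= (\prod_(j <- s) a j)%:E * \prod_(j <- s) g j)%E.
Proof.
move=> f0 g0 a0 fg; elim: s => [|x s IH]; first by rewrite !big_nil mul1e.
rewrite !big_cons EFinM muleACA; apply: lee_pmul => //.
exact: prode_ge0.
Qed.

Section prob.
Context {R : realType} {d : measure_display} {T : measurableType d}
  (P : probability T R) (N : nat) (eta : 'I_N -> nat -> T -> R) (b : ('I_N * nat)%type -> R).
Local Notation I := ('I_N * nat)%type.
Local Notation S := ('I_N -> nat -> R).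
Hypothesis hb : forall j, 0 < b j.
Hypothesis meta : forall i t, measurable_fun setT (eta i t).
Hypothesis hind : mutually_independent P (fun it : I => eta it.1 it.2).
Hypothesis hlap : forall j : I, has_laplace_law P (b j) (eta j.1 j.2).
Variables (sh : 'I_N -> nat -> R) (K : R) (j0 : I).
Hypothesis HK : forall u : seq I, uniq u -> expR (\sum_(j <- u) `|sh j.1 j.2| / b j) <= K.

Definition pre (A : set S) : set T := [set w | A (fun i t => eta i t w)].
Definition spre (A : set S) : set T := [set w | A (fun i t => eta i t w + sh i t)].

Lemma meas_eta (j : I) (B : set R) : measurable B -> measurable ((fun w => eta j.1 j.2 w) @^-1` B).
Proof. by move=> mB; rewrite -[X in measurable X]setTI; apply: meta. Qed.

Lemma pre_rect (u : seq I) (H : I -> set R) : pre (rect N u H) =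
  \bigcap_(j in [set` undup u]) ((fun it : I => eta it.1 it.2) j @^-1` H j).
Proof.
apply/seteqP; split => w /=.
  by move=> h j /=; rewrite mem_undup; apply: h.
by move=> h j ju; apply: (h j) => /=; rewrite mem_undup.
Qed.

Lemma spre_rect (u : seq I) (H : I -> set R) : spre (rect N u H) =
  \bigcap_(j in [set` undup u]) ((fun it : I => eta it.1 it.2) j @^-1`
     [set x | H j (x + sh j.1 j.2)]).
Proof.
apply/seteqP; split => w /=.
  by move=> h j /=; rewrite mem_undup; apply: h.
by move=> h j ju; apply: (h j) => /=; rewrite mem_undup.
Qed.

Lemma meas_pre_rect (u : seq I) (H : I -> set R) : (forall j, measurable (H j)) -> measurable (pre (rect N u H)).
Proof.
move=> mH; rewrite pre_rect; apply: fin_bigcap_measurable; first exact: finite_seq.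
by move=> j _; apply: meas_eta.
Qed.

Lemma meas_spre_rect (u : seq I) (H : I -> set R) : (forall j, measurable (H j)) -> measurable (spre (rect N u H)).
Proof.
move=> mH; rewrite spre_rect; apply: fin_bigcap_measurable; first exact: finite_seq.
by move=> j _; apply: meas_eta; apply: measurable_shift_set.
Qed.

Lemma rect_ineq (u : seq I) (H : I -> set R) : (forall j, measurable (H j)) ->
  (P (spre (rect N u H)) <= K%:E * P (pre (rect N u H)))%E.
Proof.
move=> mH; rewrite spre_rect pre_rect !hind ?undup_uniq //; last first.
  by move=> j; apply: measurable_shift_set.
apply: le_trans.
  apply: (@prod_lee R I _ (fun j : I => P (eta j.1 j.2 @^-1` [set x | H j (x + sh j.1 j.2)%R]))
     (fun j : I => P (eta j.1 j.2 @^-1` H j)) (fun j : I => expR (`|sh j.1 j.2| / b j))) => // j.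
  by apply: laplace_shift_le.
rewrite /= -(expR_sum (undup u) xpredT (fun j : I => `|sh j.1 j.2| / b j)).
apply: lee_wpmul2r; first exact: prode_ge0.
by rewrite lee_fin; apply: HK; apply: undup_uniq.
Qed.

Definition Cl : set (set S) := [set A | measurable (pre A) /\ measurable (spre A) /\
  (P (spre A) <= K%:E * P (pre A))%E].

Lemma K_fin : (K%:E : \bar R) \is a fin_num.
Proof. by []. Qed.

Lemma P_lty (A : set T) : measurable A -> (P A < +oo)%E.
Proof. by move=> mA; apply: (le_lt_trans (probability_le1 P mA)); exact: ltey. Qed.

Lemma Cl_monotone : monotone Cl.
Proof.
split.
- move=> F ndF CF.
  have mp n : measurable (pre (F n)) by have [] := CF n.
  have msp n : measurable (spre (F n)) by have [? []] := CF n.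
  have e1 : pre (\bigcup_n F n) = \bigcup_n pre (F n).
    by apply/seteqP; split => w /= [n _ h]; exists n.
  have e2 : spre (\bigcup_n F n) = \bigcup_n spre (F n).
    by apply/seteqP; split => w /= [n _ h]; exists n.
  have mU : measurable (pre (\bigcup_n F n)) by rewrite e1; exact: bigcup_measurable.
  have msU : measurable (spre (\bigcup_n F n)) by rewrite e2; exact: bigcup_measurable.
  split => //; split => //.
  have c1 : (P \o (pre \o F)) x @[x --> \oo] --> P (pre (\bigcup_n F n)).
    rewrite e1; apply: nondecreasing_cvg_mu => //.
    move=> n m nm; apply/subsetPset => w /=; have := ndF n m nm.
    by move/subsetPset; apply.
  have c2 : (P \o (spre \o F)) x @[x --> \oo] --> P (spre (\bigcup_n F n)).
    rewrite e2; apply: nondecreasing_cvg_mu => //.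
    move=> n m nm; apply/subsetPset => w /=; have := ndF n m nm.
    by move/subsetPset; apply.
  apply: (lee_cvg_to c2 (cvgeZl K_fin c1)).
  by apply: nearW => n; have [_ []] := CF n.
- move=> F niF CF.
  have mp n : measurable (pre (F n)) by have [] := CF n.
  have msp n : measurable (spre (F n)) by have [? []] := CF n.
  have e1 : pre (\bigcap_n F n) = \bigcap_n pre (F n).
    by apply/seteqP; split => w /= h n _; apply: h.
  have e2 : spre (\bigcap_n F n) = \bigcap_n spre (F n).
    by apply/seteqP; split => w /= h n _; apply: h.
  have mU : measurable (pre (\bigcap_n F n)) by rewrite e1; exact: bigcapT_measurable.
  have msU : measurable (spre (\bigcap_n F n)) by rewrite e2; exact: bigcapT_measurable.
  split => //; split => //.
  have c1 : (P \o (pre \o F)) x @[x --> \oo] --> P (pre (\bigcap_n F n)).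
    rewrite e1; apply: nonincreasing_cvg_mu => //; first exact: (P_lty _ (mp 0%N)).
    move=> n m nm; apply/subsetPset => w /=; have := niF n m nm.
    by move/subsetPset; apply.
  have c2 : (P \o (spre \o F)) x @[x --> \oo] --> P (spre (\bigcap_n F n)).
    rewrite e2; apply: nonincreasing_cvg_mu => //; first exact: (P_lty _ (msp 0%N)).
    move=> n m nm; apply/subsetPset => w /=; have := niF n m nm.
    by move/subsetPset; apply.
  apply: (lee_cvg_to c2 (cvgeZl K_fin c1)).
  by apply: nearW => n; have [_ []] := CF n.
Qed.



Lemma Pi_Cl : Pi N `<=` Cl.
Proof.
move=> _ [u [H [mH ->]]]; split; first exact: meas_pre_rect.
by split; [exact: meas_spre_rect|exact: rect_ineq].
Qed.

Lemma ring_Cl : <<r Pi N >> `<=` Cl.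
Proof.
move=> A hA; have [B [fB tB BPi ->]] := ring_decomp N j0 A hA.
have e1 : pre (\bigcup_(X in B) X) = \bigcup_(X in B) pre X.
  by apply/seteqP; split => w /= [X BX h]; exists X.
have e2 : spre (\bigcup_(X in B) X) = \bigcup_(X in B) spre X.
  by apply/seteqP; split => w /= [X BX h]; exists X.
have mp X : B X -> measurable (pre X) by move=> /BPi /Pi_Cl [].
have msp X : B X -> measurable (spre X) by move=> /BPi /Pi_Cl [_ []].
have tp : trivIset B pre.
  move=> X Y BX BY [w [hX hY]]; apply: tB => //.
  by exists (fun i t => eta i t w).
have tsp : trivIset B spre.
  move=> X Y BX BY [w [hX hY]]; apply: tB => //.
  by exists (fun i t => eta i t w + sh i t).
rewrite /Cl /= e1 e2; split; first exact: fin_bigcup_measurable.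
split; first exact: fin_bigcup_measurable.
rewrite !measure_fin_bigcup // ge0_mule_fsumr //; apply: lee_fsum => // X BX.
by have [_ []] := @Pi_Cl X (BPi X BX).
Qed.

Lemma sigma_Cl : <<s (@Pi R N) >> `<=` Cl.
Proof.
have h1 : <<sr <<r (@Pi R N) >> >> `<=` Cl.
  exact: (monotone_setring_sub_g_sigma_ring Cl_monotone (smallest_setring ((@Pi R N))) ring_Cl).
move=> A hA; apply: h1; move: A hA.
case: (smallest_sigma_ring (<<r (@Pi R N) >>)) => s0 sD sU.
apply: smallest_sub.
  split => // A hA; apply: sD => //.
  apply: sub_g_sigma_ring; apply: sub_setring.
  exists [::], (fun _ => setT); split => //.
  by apply/seteqP; split.
by move=> X PX; apply: sub_g_sigma_ring; apply: sub_setring.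
Qed.
End prob.
Section obs.
Context {R : realType} (N : nat) (sigma : R) (th th' : 'I_N -> R) (i0 : 'I_N).
Hypothesis hadj : forall j, j != i0 -> th j = th' j.

Definition shft (i : 'I_N) (t : nat) : R :=
  if i == i0 then (1 - sigma) ^+ t * (th i0 - th' i0) else 0.

Lemma client_state_shift (e : 'I_N -> nat -> R) t j :
  client_state sigma th e t j =
  client_state sigma th' (fun i t => e i t + shft i t) t j + shft j t.
Proof.
elim: t j => [|t IH] j /=.
  rewrite /shft; case: eqP => [->|/eqP ne]; last by rewrite hadj // addr0.
  by rewrite expr0 mul1r; ring.
rewrite IH.
under eq_bigr do rewrite IH.
have -> : \sum_(i < N) (client_state sigma th' (fun i t => e i t + shft i t) t i +
       shft i t + e i t) = \sum_(i < N) (client_state sigma th' (fun i t => e i t + shft i t) t i +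
       (e i t + shft i t)).
  by apply: eq_bigr => i _; ring.
have -> : shft j t.+1 = (1 - sigma) * shft j t.
  by rewrite /shft exprS; case: (j == i0); ring.
ring.
Qed.

Lemma observation_shift (e : 'I_N -> nat -> R) :
  observation sigma th e = observation sigma th' (fun i t => e i t + shft i t).
Proof.
have hm t i : client_msg sigma th e t i =
    client_msg sigma th' (fun i t => e i t + shft i t) t i.
  by rewrite /client_msg client_state_shift; ring.
apply: funext => t; rewrite /observation /server_state.
have -> : client_msg sigma th e t = client_msg sigma th' (fun i t => e i t + shft i t) t.
  by apply: funext => i; apply: hm.
by [].
Qed.

Lemma sum_uniq_sub (s s' : seq nat) (g : nat -> R) : (forall t, 0 <= g t) ->
  uniq s -> uniq s' -> {subset s <= s'} -> \sum_(t <- s) g t <= \sum_(t <- s') g t.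
Proof.
move=> g0 us us' ss'; rewrite [X in _ <= X](bigID (fun t => t \in s)) /=.
have -> : \sum_(t <- s' | t \in s) g t = \sum_(t <- s) g t.
  rewrite -big_filter; apply: perm_big; apply: uniq_perm.
  - exact: filter_uniq.
  - exact: us.
  - by move=> x; rewrite mem_filter; case: (boolP (x \in s)) => // /ss' ->.
by rewrite lerDl; apply: sumr_ge0 => t _; apply: g0.
Qed.

Lemma mem_le_sumn (s : seq nat) t : t \in s -> (t <= sumn s)%N.
Proof.
elim: s => [//|x s IH]; rewrite inE /= => /orP [/eqP ->|/IH h]; first exact: leq_addr.
exact: (leq_trans h (leq_addl _ _)).
Qed.

Lemma shft_bound (c q delta : R) (u : seq ('I_N * nat)) :
  0 < sigma < 1 -> 0 < c -> 1 - sigma < q < 1 -> `|th i0 - th' i0| <= delta -> uniq u ->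
  \sum_(j <- u) `|shft j.1 j.2| / (c * q ^+ j.2) <= q / (c * (q + sigma - 1)) * delta.
Proof.
move=> /andP [s0 s1] c0 /andP [q1 q2] hD uu.
have q0 : 0 < q by lra.
pose a := `|th i0 - th' i0| / c; pose r := (1 - sigma) / q.
have a0 : 0 <= a by rewrite /a divr_ge0 // ltW.
have r0 : 0 < r by rewrite /r divr_gt0 //; lra.
have r1 : `|r| < 1 by rewrite gtr0_norm // /r ltr_pdivrMr // mul1r; lra.
have step1 j : `|shft j.1 j.2| / (c * q ^+ j.2) = if j.1 == i0 then a * r ^+ j.2 else 0.
  rewrite /shft; case: eqP => _; last by rewrite normr0 mul0r.
  rewrite normrM normrX (ger0_norm (x := 1 - sigma)); last by lra.
  rewrite /a /r expr_div_n; field.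
  by rewrite expf_neq0 ?gt_eqF //; apply/andP; split; rewrite ?gt_eqF.
under eq_bigr do rewrite step1.
rewrite -big_mkcond -big_filter -(big_map snd xpredT (fun t => a * r ^+ t)).
set s := map _ _.
have us : uniq s.
  rewrite map_inj_in_uniq; first exact: filter_uniq.
  move=> [i t] [i' t'] /=; rewrite !mem_filter /= => /andP [/eqP -> _] /andP [/eqP -> _] ->.
  by [].
apply: (le_trans (sum_uniq_sub s (iota 0 (sumn s).+1) (fun t => a * r ^+ t) _ us _ _)).
- by move=> t; rewrite mulr_ge0 // exprn_ge0 // ltW.
- exact: iota_uniq.
- by move=> t ts; rewrite mem_iota /= add0n ltnS mem_le_sumn.
apply: (le_trans (y := a / (1 - r))).
  have := geometric_le_lim (sumn s).+1 a0 r0 r1.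
  by rewrite /series /= /index_iota subn0.
have -> : a / (1 - r) = q / (c * (q + sigma - 1)) * `|th i0 - th' i0|.
  rewrite /a /r; field.
  have h1 : q + sigma - 1 != 0 by rewrite gt_eqF //; lra.
  by rewrite h1 !gt_eqF.
by apply: ler_wpM2l => //; rewrite divr_ge0 ?mulr_ge0 //; try lra; rewrite ltW.
Qed.
End obs.
Section meas.
Context {R : realType} (N : nat) (sigma : R) (th : 'I_N -> R).
Local Notation ST := (g_sigma_algebraType (@Pi R N)).

Lemma meas_coord (i : 'I_N) (t : nat) : measurable_fun [set: ST] (fun e : ST => e i t).
Proof.
move=> _ B mB; rewrite setTI; apply: sub_sigma_algebra.
exists [:: (i, t)], (fun _ => B); split => //.
apply/seteqP; split => e /=.
  by move=> h j; rewrite mem_seq1 => /eqP ->.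
by move=> /(_ (i, t)); rewrite mem_seq1 eqxx; apply.
Qed.

Lemma meas_cs t i : measurable_fun [set: ST] (fun e : ST => client_state sigma th e t i).
Proof.
elim: t i => [|t IH] i /=; first exact: measurable_cst.
apply: measurable_funD.
  exact: (measurable_funM (measurable_cst _) (IH i)).
apply: (measurable_funM (measurable_cst _)).
apply: (measurable_funM (measurable_cst _)).
apply: measurable_sum => j.
exact: (measurable_funD (IH j) (meas_coord j t)).
Qed.

Lemma meas_msg t i : measurable_fun [set: ST] (fun e : ST => client_msg sigma th e t i).
Proof. exact: (measurable_funD (meas_cs t i) (meas_coord i t)). Qed.

Lemma meas_srv t : measurable_fun [set: ST] (fun e : ST => server_state sigma th e t).
Proof.
apply: (measurable_funM (measurable_cst _)).
by apply: measurable_sum => j; exact: meas_msg.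
Qed.

Lemma obs_meas (Obs : set (nat -> ('I_N -> R) * R)) : obs_measurable Obs ->
  <<s @Pi R N >> [set e | observation sigma th e \in Obs].
Proof.
move=> hO.
suff : <<s @obs_cylinders R N >> `<=` [set O | <<s @Pi R N >> [set e | O (observation sigma th e)]].
  move=> /(_ Obs hO).
  by rewrite (_ : [set e | observation sigma th e \in Obs] = [set e | Obs (observation sigma th e)]) //;
    apply/seteqP; split => e /=; rewrite in_setE.
apply: smallest_sub.
  split => /=.
  - by rewrite (_ : [set e | set0 (observation sigma th e)] = set0) //; exact: sigma_algebra0.
  - move=> A hA; rewrite (_ : [set e | (setT `\` A) (observation sigma th e)] =
       setT `\` [set e | A (observation sigma th e)]); first exact: sigma_algebraCD.
    by apply/seteqP; split => e /=.
  - move=> F hF; rewrite (_ : [set e | (\bigcup_n F n) (observation sigma th e)] =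
       \bigcup_n [set e | F n (observation sigma th e)]); first exact: sigma_algebra_bigcup.
    by apply/seteqP; split => e /=.
move=> _ [t [B [mB [[i ->]| ->]]]] /=.
  have := meas_msg t i measurableT B mB; rewrite setTI.
  by rewrite (_ : _ @^-1` B = [set e | (observation sigma th e t).1 i \in B]) //;
    apply/seteqP; split => e /=; rewrite in_setE.
have := meas_srv t measurableT B mB; rewrite setTI.
by rewrite (_ : _ @^-1` B = [set e | (observation sigma th e t).2 \in B]) //;
  apply/seteqP; split => e /=; rewrite in_setE.
Qed.
End meas.

Theorem mainTheorem1 (R : realType) (d : measure_display)
  (T : measurableType d) (P : probability T R)
  (N : nat) (sigma c q : R)
  (eta : 'I_N -> nat -> T -> R) :
  (0 < N)%N ->
  0 < sigma < 1 -> 0 < c -> 1 - sigma < q < 1 ->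
  (forall i t, measurable_fun setT (eta i t)) ->
  mutually_independent P (fun it : 'I_N * nat => eta it.1 it.2) ->
  (forall i t, has_laplace_law P (c * q ^+ t) (eta i t)) ->
  forall (delta : R) (th th' : 'I_N -> R)
         (Obs : set (nat -> ('I_N -> R) * R)),
    0 <= delta ->
    delta_adjacent delta th th' ->
    obs_measurable Obs ->
    (P [set w | observation sigma th (fun i t => eta i t w) \in Obs] <=
     (expR (q / (c * (q + sigma - 1)) * delta))%:E *
     P [set w | observation sigma th' (fun i t => eta i t w) \in Obs])%E.
Proof.
move=> N0 hs c0 hq meta hind hlap delta th th' Obs d0 [i0 [hD hadj]] hObs.
pose b := fun j : 'I_N * nat => c * q ^+ j.2.
have q0 : 0 < q by case/andP: hs => ? ?; case/andP: hq => ? ?; lra.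
have hb : forall j, 0 < b j by move=> j; rewrite /b mulr_gt0 // exprn_gt0.
have hlap' : forall j : 'I_N * nat, has_laplace_law P (b j) (eta j.1 j.2).
  by move=> j; apply: hlap.
pose sh := shft N sigma th th' i0.
pose K := expR (q / (c * (q + sigma - 1)) * delta).
have HK : forall u : seq ('I_N * nat), uniq u ->
    expR (\sum_(j <- u) `|sh j.1 j.2| / b j) <= K.
  move=> u uu; rewrite /K ler_expR.
  by apply: shft_bound.
pose A := [set e : 'I_N -> nat -> R | observation sigma th' e \in Obs].
have hA : <<s @Pi R N >> A by apply: obs_meas.
have := @sigma_Cl R d T P N eta b hb meta hind hlap' sh K (i0, 0%N) HK A hA.
move=> [_ [_ hle]].
rewrite (_ : [set w | observation sigma th (fun i t => eta i t w) \in Obs] = spre N eta sh A).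
  exact: hle.
apply/seteqP; split => w /=; by rewrite (observation_shift N sigma th th' i0 hadj).
Qed.
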